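(* Let $(A,\succ,\prec)$ be an anti-pre-Novikov algebra, $s\in A\otimes A$ define a factorizable anti-pre-Novikov bialgebra $(A,\succ,\prec,\Delta_{\succ,s},\Delta_{\prec,s})$, and $\lambda\in k$ nonzero; let $(A,\succ,\prec,P,\omega)$ be the corresponding quadratic Rota–Baxter anti-pre-Novikov algebra of weight $\lambda$, i.e. $\omega(x,y)=-\lambda\langle T_{s+\tau(s)}^{-1}(x),y\rangle$ and $P=T_s\omega^\sharp$. Then $(A,\succ,\prec,\Delta_{\succ,\tau(s)},\Delta_{\prec,\tau(s)})$ is a factorizable anti-pre-Novikov bialgebra, and its corresponding quadratic Rota–Baxter anti-pre-Novikov algebra of weight $\lambda$ (with $\omega'(x,y)=-\lambda\langle T_{\tau(s)+s}^{-1}(x),y\rangle$ and $P'=T_{\tau(s)}\omega'^\sharp$) is $(A,\succ,\prec,-\lambda I-P,\omega)$.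
   Context: $A$ is finite-dimensional over a field $k$. An anti-pre-Novikov algebra is $(A,\succ,\prec)$ such that with $x\circ y=x\succ y+x\prec y$: $(x\circ y-y\circ x)\succ z=y\succ(x\succ z)-x\succ(y\succ z)$; $x\prec(y\circ z)=(y\succ x)\prec z-(x\prec y)\prec z-y\succ(x\prec z)$; $(x\circ y)\succ z=-(x\succ z)\prec y$; $(x\prec y)\prec z=(x\prec z)\prec y$; $(x\circ y-y\circ x)\prec z=x\succ(y\circ z)-y\succ(x\circ z)$. Notation: $x\odot y=x\succ y+y\prec x$; $L_\ast(x)y=x\ast y$, $R_\ast(x)y=y\ast x$; $L_{\star}=L_{\circ}+R_{\circ}$, $L_{\odot}=L_{\succ}+R_{\prec}$; $\tau$ is the flip; $T_r:A^*\to A$, $\langle T_r(\zeta),\eta\rangle=\langle r,\zeta\otimes\eta\rangle$; for a bilinear form $\omega$, $\omega^\sharp:A\to A^*$, $\langle\omega^\sharp(x),y\rangle=\omega(x,y)$. $r$ is invariant if $(I\otimes L_{\star}(x)-L_{\succ}(x)\otimes I)r=0$ and $(L_{\circ}(x)\otimes I-I\otimes L_{\odot}(x))r=0$ for all $x$. For $s=\sum_i a_i\otimes b_i$ the APN-YBE is $\sum_{i,j}a_i\circ a_j\otimes b_i\otimes b_j+\sum_{i,j}a_j\otimes a_i\otimes(b_i\odot b_j)+\sum_{i,j}a_i\otimes(b_i\prec a_j)\otimes b_j=0$. With $\Delta_{\succ,r}(x)=(I\otimes L_{\star}(x)-L_{\succ}(x)\otimes I)r$, $\Delta_{\prec,r}(x)=(L_{\circ}(x)\otimes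 I-I\otimes L_{\odot}(x))r$, the datum $(A,\succ,\prec,\Delta_{\succ,r},\Delta_{\prec,r})$ is a factorizable anti-pre-Novikov bialgebra when $r$ solves the APN-YBE, $r+\tau(r)$ is invariant, and $T_{r+\tau(r)}$ is a linear isomorphism. A quadratic Rota–Baxter anti-pre-Novikov algebra of weight $\lambda$ is $(A,\succ,\prec,P,\omega)$ with $P(x)\prec P(y)=P(P(x)\prec y+x\prec P(y)+\lambda x\prec y)$, $P(x)\succ P(y)=P(P(x)\succ y+x\succ P(y)+\lambda x\succ y)$, $\omega$ non-degenerate symmetric with $\omega(x\prec y,z)=-\omega(x,z\circ y)$, $\omega(x\succ y,z)=\omega(x\circ z+z\circ x,y)$, and $\omega(P(x),y)+\omega(x,P(y))+\lambda\omega(x,y)=0$. *)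

(* Defs.v *)
(* A finite-dimensional algebra A over a field K is modelled as
   K^n = 'rV[K]_n with a fixed basis e_i = ev i; bilinear products are given by
   structure constants.  A (x) A is modelled by n x n matrices
   (r = \sum_(i,j) r i j e_i (x) e_j), A^* by row vectors (dual basis). *)
From HB Require Import structures.
From mathcomp Require Import all_boot all_algebra.
Set Implicit Arguments. Unset Strict Implicit. Unset Printing Implicit Defensive.
Import GRing.Theory.
Local Open Scope ring_scope.

Definition bmul (K : fieldType) (n : nat) (c : 'I_n -> 'I_n -> 'rV[K]_n)
  (x y : 'rV[K]_n) : 'rV[K]_n :=
  \sum_(i < n) \sum_(j < n) (x 0 i * y 0 j) *: c i j.

Section APN.
Variables (K : fieldType) (n : nat).
Variables (succ prec : 'rV[K]_n -> 'rV[K]_n -> 'rV[K]_n).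

Definition circ x y := succ x y + prec x y.
Definition odot x y := succ x y + prec y x.
Definition Lstar x y := circ x y + circ y x.

Definition is_APN : Prop := forall x y z,
  [/\ succ (circ x y - circ y x) z = succ y (succ x z) - succ x (succ y z),
      prec x (circ y z) = prec (succ y x) z - prec (prec x y) z - succ y (prec x z),
      succ (circ x y) z = - prec (succ x z) y,
      prec (prec x y) z = prec (prec x z) y &
      prec (circ x y - circ y x) z = succ x (circ y z) - succ y (circ x z)].

Definition ev (i : 'I_n) : 'rV[K]_n := delta_mx 0 i.
Definition tens (x y : 'rV[K]_n) : 'M[K]_n := x^T *m y.
Definition tmap (f g : 'rV[K]_n -> 'rV[K]_n) (r : 'M[K]_n) : 'M[K]_n :=
  \sum_(i < n) \sum_(j < n) r i j *: tens (f (ev i)) (g (ev j)).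

Definition invariant (r : 'M[K]_n) : Prop := forall x,
  tmap id (Lstar x) r - tmap (succ x) id r = 0 /\
  tmap (circ x) id r - tmap id (odot x) r = 0.

(* coordinate (p,q,r) of x (x) y (x) z *)
Definition tens3 (x y z : 'rV[K]_n) (p q r : 'I_n) : K := x 0 p * y 0 q * z 0 r.

Definition APN_YBE (s : 'M[K]_n) : Prop := forall p q r : 'I_n,
  \sum_(i < n) \sum_(j < n) \sum_(k < n) \sum_(l < n)
     s i j * s k l *
     (tens3 (circ (ev i) (ev k)) (ev j) (ev l) p q r
      + tens3 (ev k) (ev i) (odot (ev j) (ev l)) p q r
      + tens3 (ev i) (prec (ev j) (ev k)) (ev l) p q r) = 0.

(* T_r : A^* -> A, <T_r(zeta), eta> = <r, zeta (x) eta> *)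
Definition Tmap (r : 'M[K]_n) (zeta : 'rV[K]_n) : 'rV[K]_n := zeta *m r.

(* factorizable APN bialgebra (A, ≻, ≺, Δ_{≻,r}, Δ_{≺,r}); tau r = r^T *)
Definition factorizable (r : 'M[K]_n) : Prop :=
  [/\ APN_YBE r, invariant (r + r^T) & bijective (Tmap (r + r^T))].

Definition pairing (x zeta : 'rV[K]_n) : K := \sum_(i < n) x 0 i * zeta 0 i.

Definition rb_omega (lam : K) (r : 'M[K]_n) (x y : 'rV[K]_n) : K :=
  - lam * pairing y (x *m invmx (r + r^T)).

Definition sharp (w : 'rV[K]_n -> 'rV[K]_n -> K) (x : 'rV[K]_n) : 'rV[K]_n :=
  \row_j w x (ev j).

Definition rb_P (lam : K) (r : 'M[K]_n) (x : 'rV[K]_n) : 'rV[K]_n :=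
  Tmap r (sharp (rb_omega lam r) x).

End APN.

(* Main.v *)
Require Import Defs.
From HB Require Import structures.
From mathcomp Require Import all_boot all_algebra.
From mathcomp Require Import ring.
Set Implicit Arguments. Unset Strict Implicit. Unset Printing Implicit Defensive.
Import GRing.Theory.
Local Open Scope ring_scope.

Section Gen.
Variables (K : fieldType) (n : nat).
Implicit Types (u v w x y : 'rV[K]_n) (r t : 'M[K]_n).

Definition lin (g : 'rV[K]_n -> 'rV[K]_n) := forall v, g v = \sum_j v 0 j *: g (ev K j).

Lemma evE (l j : 'I_n) : (ev K l : 'rV[K]_n) 0 j = (l == j)%:R.
Proof. by rewrite /ev mxE eqxx /= eq_sym. Qed.

Lemma sum_ev (j : 'I_n) (F : 'I_n -> K) : \sum_l (ev K l : 'rV[K]_n) 0 j * F l = F j.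
Proof.
rewrite (bigD1 j) //= big1 => [|l Hl]; first by rewrite evE eqxx mul1r addr0.
by rewrite evE (negbTE Hl) mul0r.
Qed.

Lemma sum_ev2 (j : 'I_n) (F : 'I_n -> K) : \sum_l (ev K j : 'rV[K]_n) 0 l * F l = F j.
Proof.
rewrite -(sum_ev j F); apply: eq_bigr => l _; by rewrite !evE eq_sym.
Qed.

Lemma lin_add g : lin g -> forall a b, g (a + b) = g a + g b.
Proof.
move=> Hg a b; rewrite Hg (Hg a) (Hg b) -big_split; apply: eq_bigr => j _.
by rewrite mxE scalerDl.
Qed.

Lemma lin_opp g : lin g -> forall a, g (- a) = - g a.
Proof.
move=> Hg a; rewrite Hg (Hg a) -sumrN; apply: eq_bigr => j _.
by rewrite mxE scaleNr.
Qed.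

Lemma linD f g : lin f -> lin g -> lin (fun v => f v + g v).
Proof.
move=> Hf Hg v; rewrite Hf Hg -big_split; apply: eq_bigr => j _ /=.
by rewrite scalerDr.
Qed.

Lemma lin_id : lin id.
Proof. move=> v; exact: row_sum_delta. Qed.

Lemma bilinE (B : 'rV[K]_n -> 'rV[K]_n -> 'rV[K]_n) :
  (forall y, lin (B^~ y)) -> (forall x, lin (B x)) ->
  forall u w, B u w = \sum_i \sum_k (u 0 i * w 0 k) *: B (ev K i) (ev K k).
Proof.
move=> HL HR u w; rewrite HL; apply: eq_bigr => i _.
rewrite HR scaler_sumr; apply: eq_bigr => k _; by rewrite scalerA.
Qed.

Definition adj (f : 'rV[K]_n -> 'rV[K]_n) (xi : 'rV[K]_n) : 'rV[K]_n :=
  \row_i \sum_a xi 0 a * f (ev K i) 0 a.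

Lemma adj_ev f p k : adj f (ev K p) 0 k = f (ev K k) 0 p.
Proof. by rewrite mxE sum_ev2. Qed.

Lemma adj_id xi : adj id xi = xi.
Proof.
apply/rowP => i; rewrite mxE (bigD1 i) //= big1 => [|a Ha]; first by rewrite evE eqxx mulr1 addr0.
by rewrite evE eq_sym (negbTE Ha) mulr0.
Qed.

Lemma adjD f g xi : adj (fun v => f v + g v) xi = adj f xi + adj g xi.
Proof.
apply/rowP => i; rewrite !mxE -big_split; apply: eq_bigr => a _.
by rewrite mxE mulrDr.
Qed.

Lemma tmapE f g t xi : lin g -> xi *m tmap f g t = g (adj f xi *m t).
Proof.
move=> Hg; rewrite Hg /tmap mulmx_sumr.
under eq_bigr => i _ do rewrite mulmx_sumr.
rewrite exchange_big /=; apply: eq_bigr => j _.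
rewrite mxE scaler_suml; apply: eq_bigr => i _.
rewrite -scalemxAr /tens mulmxA [xi *m _]mx11_scalar mul_scalar_mx.
rewrite scalerA mulrC !mxE; congr (_ * _ *: _); apply: eq_bigr => a _; by rewrite !mxE.
Qed.


Lemma evmx q (M : 'M[K]_n) i : (ev K q *m M) 0 i = M q i.
Proof. by rewrite mxE sum_ev2. Qed.

Lemma sum4D (F G : 'I_n -> 'I_n -> 'I_n -> 'I_n -> K) :
  \sum_i \sum_j \sum_k \sum_l (F i j k l + G i j k l) =
  \sum_i \sum_j \sum_k \sum_l F i j k l + \sum_i \sum_j \sum_k \sum_l G i j k l.
Proof.
rewrite -big_split; apply: eq_bigr => i _; rewrite -big_split; apply: eq_bigr => j _.
rewrite -big_split; apply: eq_bigr => k _; by rewrite -big_split.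
Qed.

Variables (sc pr : 'rV[K]_n -> 'rV[K]_n -> 'rV[K]_n).
Hypothesis Hsl : forall y, lin (sc^~ y).
Hypothesis Hsr : forall x, lin (sc x).
Hypothesis Hpl : forall y, lin (pr^~ y).
Hypothesis Hpr : forall x, lin (pr x).

Lemma lin_circL y : lin ((circ sc pr)^~ y).
Proof. exact: linD. Qed.
Lemma lin_circR x : lin (circ sc pr x).
Proof. exact: linD. Qed.
Lemma lin_odotL y : lin ((odot sc pr)^~ y).
Proof. exact: linD. Qed.
Lemma lin_odotR x : lin (odot sc pr x).
Proof. exact: linD. Qed.
Lemma lin_LstarR x : lin (Lstar sc pr x).
Proof. apply: linD; [exact: lin_circR | exact: lin_circL]. Qed.

Lemma circL u w : circ sc pr u w = \sum_i u 0 i *: circ sc pr (ev K i) w.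
Proof. exact: (lin_circL w u). Qed.
Lemma prL u w : pr u w = \sum_i u 0 i *: pr (ev K i) w.
Proof. exact: (Hpl w u). Qed.

Definition E r xi eta :=
  adj (circ sc pr (eta *m r^T)) xi *m r + odot sc pr (eta *m r) (xi *m r)
  + adj (pr (xi *m r)) eta *m r.

Lemma ybeE r p q c :
  \sum_(i < n) \sum_(j < n) \sum_(k < n) \sum_(l < n)
     r i j * r k l *
     (tens3 (circ sc pr (ev K i) (ev K k)) (ev K j) (ev K l) p q c
      + tens3 (ev K k) (ev K i) (odot sc pr (ev K j) (ev K l)) p q c
      + tens3 (ev K i) (pr (ev K j) (ev K k)) (ev K l) p q c)
  = E r (ev K p) (ev K q) 0 c.
Proof.
set C := fun i k => circ sc pr (ev K i) (ev K k) 0 p.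
set O := fun a b => odot sc pr (ev K a) (ev K b) 0 c.
set Pr := fun a k => pr (ev K a) (ev K k) 0 q.
transitivity (\sum_i \sum_j' \sum_k \sum_l
   (ev K j' 0 q * (ev K l 0 c * (r i j' * r k l * C i k))
   + ev K k 0 p * (ev K i 0 q * (r i j' * r k l * O j' l))
   + ev K i 0 p * (ev K l 0 c * (r i j' * r k l * Pr j' k)))).
  apply: eq_bigr => i _; apply: eq_bigr => j' _; apply: eq_bigr => k _; apply: eq_bigr => l _.
  rewrite /tens3 /C /O /Pr; ring.
rewrite !sum4D.
under eq_bigr => i _ do under eq_bigr => j' _ do under eq_bigr => k _ do rewrite -big_distrr sum_ev.
under eq_bigr => i _ do under eq_bigr => j' _ do rewrite -big_distrr.
under eq_bigr => i _ do rewrite sum_ev.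
under [X in _ + X + _]eq_bigr => i _ do under eq_bigr => j' _ do under eq_bigr => k _ do rewrite -big_distrr.
under [X in _ + X + _]eq_bigr => i _ do under eq_bigr => j' _ do rewrite sum_ev.
under [X in _ + X + _]eq_bigr => i _ do under eq_bigr => j' _ do rewrite -big_distrr.
under [X in _ + X + _]eq_bigr => i _ do rewrite -big_distrr.
rewrite [X in _ + X + _]sum_ev.
under [X in _ + X]eq_bigr => i _ do under eq_bigr => j' _ do under eq_bigr => k _ do rewrite -big_distrr sum_ev.
under [X in _ + X]eq_bigr => i _ do under eq_bigr => j' _ do rewrite -big_distrr.
under [X in _ + X]eq_bigr => i _ do rewrite -big_distrr.
rewrite [X in _ + X]sum_ev.
rewrite /E !mxE.
symmetry.
under [X in X + _ + _ = _]eq_bigr => k _ do rewrite adj_ev circL summxE.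
under [X in _ + X = _]eq_bigr => k _ do rewrite adj_ev prL summxE.
rewrite (bilinE Hsl Hsr) (bilinE Hpl Hpr) !summxE.
under [X in X + _ + _ = _]eq_bigr => k _ do under eq_bigr => i _ do rewrite mxE evmx mxE.
under [X in _ + X = _]eq_bigr => k _ do under eq_bigr => i _ do rewrite mxE evmx.
under [X in _ + (X + _) + _ = _]eq_bigr => k _ do (rewrite summxE; under eq_bigr => i _ do rewrite mxE !evmx).
under [X in _ + (_ + X) + _ = _]eq_bigr => k _ do (rewrite summxE; under eq_bigr => i _ do rewrite mxE !evmx).
congr (_ + _ + _).
- rewrite exchange_big; apply: eq_bigr => i _ /=; rewrite big_distrl; apply: eq_bigr => k _ /=.
  by rewrite /C; ring.
- rewrite [X in _ + X = _]exchange_big -big_split; apply: eq_bigr => i _ /=.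
  rewrite -big_split; apply: eq_bigr => k _ /=; rewrite /O /odot mxE; ring.
- rewrite exchange_big; apply: eq_bigr => i _ /=; rewrite big_distrl; apply: eq_bigr => k _ /=.
  by rewrite /Pr; ring.
Qed.


Lemma scDl a b w : sc (a + b) w = sc a w + sc b w. Proof. exact: (lin_add (Hsl w)). Qed.
Lemma scDr w a b : sc w (a + b) = sc w a + sc w b. Proof. exact: (lin_add (Hsr w)). Qed.
Lemma scNl a w : sc (- a) w = - sc a w. Proof. exact: (lin_opp (Hsl w)). Qed.
Lemma scNr w a : sc w (- a) = - sc w a. Proof. exact: (lin_opp (Hsr w)). Qed.
Lemma prDl a b w : pr (a + b) w = pr a w + pr b w. Proof. exact: (lin_add (Hpl w)). Qed.
Lemma prDr w a b : pr w (a + b) = pr w a + pr w b. Proof. exact: (lin_add (Hpr w)). Qed.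
Lemma prNl a w : pr (- a) w = - pr a w. Proof. exact: (lin_opp (Hpl w)). Qed.
Lemma prNr w a : pr w (- a) = - pr w a. Proof. exact: (lin_opp (Hpr w)). Qed.

Definition Fdef (Q Q' : 'rV[K]_n -> 'rV[K]_n) x y :=
  Q (odot sc pr (Q' y) x) + odot sc pr (Q y) (Q x)
  + Q (odot sc pr (Q x) y - Lstar sc pr (Q x) y).

Lemma key (Q Q' : 'rV[K]_n -> 'rV[K]_n) x y :
  (forall a b, Q (a + b) = Q a + Q b) -> (forall a, Q (- a) = - Q a) ->
  (forall v, Q' v = v - Q v) ->
  Fdef Q Q' x y = Fdef Q' Q x y.
Proof.
move=> QD QN HQ'; rewrite /Fdef !HQ' /Lstar /odot /circ.
rewrite !(scDl, scDr, scNl, scNr, prDl, prDr, prNl, prNr, opprD, opprK, QD, QN).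
apply/rowP => j; rewrite !mxE; ring.
Qed.

Lemma adj_prE z eta : adj (pr z) eta = adj (circ sc pr z) eta - adj (sc z) eta.
Proof.
have -> : adj (circ sc pr z) eta = adj (sc z) eta + adj (pr z) eta by exact: adjD.
by rewrite addrC addKr.
Qed.

Lemma Eform r t (Q Q' : 'rV[K]_n -> 'rV[K]_n) xi eta :
  t \in unitmx ->
  (forall z xi, adj (circ sc pr z) xi *m t = odot sc pr z (xi *m t)) ->
  (forall z xi, adj (sc z) xi *m t = Lstar sc pr z (xi *m t)) ->
  (forall v, Q v = v *m (invmx t *m r)) ->
  (forall v, Q' v = v *m (invmx t *m r^T)) ->
  E r xi eta = Fdef Q Q' (xi *m t) (eta *m t).
Proof.
move=> tU I1 I2 HQ HQ'; rewrite /E /Fdef !HQ !HQ'.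
have hh : forall w (M : 'M[K]_n), w *m t *m (invmx t *m M) = w *m M.
  by move=> w M; rewrite mulmxA (mulmxK tU).
rewrite !hh -I1 hh adj_prE -I1 -I2 -mulmxBl hh.
by [].
Qed.

Lemma invar_facts t : Defs.invariant sc pr t ->
  (forall z xi, adj (circ sc pr z) xi *m t = odot sc pr z (xi *m t)) /\
  (forall z xi, adj (sc z) xi *m t = Lstar sc pr z (xi *m t)).
Proof.
move=> Hinv; split => z xi; have [H1 H2] := Hinv z.
- have := congr1 (mulmx xi) (subr0_eq H2).
  rewrite (tmapE _ _ _ lin_id) (tmapE _ _ _ (lin_odotR z)) adj_id; exact.
- have := congr1 (mulmx xi) (subr0_eq H1).
  rewrite (tmapE _ _ _ lin_id) (tmapE _ _ _ (lin_LstarR z)) adj_id => ->; by [].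
Qed.

End Gen.

Section Bmul.
Variables (K : fieldType) (n : nat) (c : 'I_n -> 'I_n -> 'rV[K]_n).

Lemma sum_evV (j : 'I_n) (F : 'I_n -> 'rV[K]_n) : \sum_l (ev K j : 'rV[K]_n) 0 l *: F l = F j.
Proof.
rewrite (bigD1 j) //= big1 => [|l Hl]; first by rewrite evE eqxx scale1r addr0.
by rewrite evE eq_sym (negbTE Hl) scale0r.
Qed.

Lemma bmul_evR x j : bmul c x (ev K j) = \sum_i x 0 i *: c i j.
Proof.
rewrite /bmul; apply: eq_bigr => i _.
under eq_bigr => k _ do rewrite mulrC -scalerA.
by rewrite sum_evV.
Qed.

Lemma bmul_evL y i : bmul c (ev K i) y = \sum_j y 0 j *: c i j.
Proof.
rewrite /bmul exchange_big /=; apply: eq_bigr => j _.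
under eq_bigr => k _ do rewrite -scalerA.
by rewrite sum_evV.
Qed.

Lemma lin_bmulR x : lin (bmul c x).
Proof.
move=> v; under [RHS]eq_bigr => j _ do rewrite bmul_evR scaler_sumr.
rewrite exchange_big /=; apply: eq_bigr => i _; apply: eq_bigr => j _.
by rewrite scalerA mulrC.
Qed.

Lemma lin_bmulL y : lin (bmul c ^~ y).
Proof.
move=> v /=; under [RHS]eq_bigr => i _ do rewrite bmul_evL scaler_sumr.
apply: eq_bigr => i _; apply: eq_bigr => j _.
by rewrite scalerA.
Qed.

End Bmul.

Lemma unit_of_bij (K : fieldType) (n : nat) (t : 'M[K]_n) :
  bijective (Tmap t) -> t \in unitmx.
Proof.
case=> g _ gK.
pose Z := \matrix_(i, j) g (ev K i) 0 j.
have : Z *m t = 1%:M.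
  apply/row_matrixP => i; rewrite row_mul row1.
  have -> : row i Z = g (ev K i) by apply/rowP => j; rewrite !mxE.
  exact: (gK (ev K i)).
by case/mulmx1_unit.
Qed.

Lemma sharpE (K : fieldType) (n : nat) (lam : K) (r : 'M[K]_n) x :
  sharp (rb_omega lam r) x = - lam *: (x *m invmx (r + r^T)).
Proof.
apply/rowP => j; rewrite !mxE /rb_omega /pairing sum_ev2.
by rewrite !mxE.
Qed.

Theorem mainTheorem19 (K : fieldType) (n : nat)
  (cs cp : 'I_n -> 'I_n -> 'rV[K]_n) (s : 'M[K]_n) (lam : K) :
  is_APN (bmul cs) (bmul cp) ->
  factorizable (bmul cs) (bmul cp) s ->
  lam != 0 ->
  [/\ factorizable (bmul cs) (bmul cp) s^T,
      (forall x y : 'rV[K]_n, rb_omega lam s^T x y = rb_omega lam s x y) &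
      (forall x : 'rV[K]_n, rb_P lam s^T x = - lam *: x - rb_P lam s x)].
Proof.
move=> _ [Hybe Hinv Hbij] _.
have tU := unit_of_bij Hbij.
set t := s + s^T in tU Hinv Hbij.
have Hst : s^T + s^T^T = t by rewrite trmxK addrC.
have Hsl := lin_bmulL cs; have Hsr := lin_bmulR cs.
have Hpl := lin_bmulL cp; have Hpr := lin_bmulR cp.
split.
- split; last by rewrite Hst.
  + move=> p q c.
    have [I1 I2] := invar_facts Hsl Hsr Hpl Hpr Hinv.
    rewrite (ybeE Hsl Hsr Hpl Hpr).
    pose Q0 := fun v : 'rV[K]_n => v *m (invmx t *m s).
    pose Q1 := fun v : 'rV[K]_n => v - Q0 v.
    have HQ1 : forall v, Q1 v = v *m (invmx t *m s^T).
      move=> v; rewrite /Q1 /Q0.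
      have -> : s^T = t - s by rewrite /t addrC addKr.
      by rewrite mulmxBr (mulVmx tU) mulmxBr mulmx1.
    have HQ0 : forall v, Q0 v = v *m (invmx t *m s^T^T) by move=> v; rewrite trmxK.
    rewrite (Eform _ _ tU I1 I2 HQ1 HQ0).
    rewrite -(@key _ _ _ _ Hsl Hsr Hpl Hpr Q0 Q1); last by [].
      rewrite -(Eform _ _ tU I1 I2 (fun v => erefl) HQ1).
      by rewrite -(ybeE Hsl Hsr Hpl Hpr) Hybe.
    by move=> a b; rewrite /Q0 mulmxDl.
    by move=> a; rewrite /Q0 mulNmx.
  + by rewrite Hst.
- by move=> x y; rewrite /rb_omega Hst.
- move=> x; rewrite /rb_P /Tmap !sharpE Hst -/t.
  have h : x *m invmx t *m s + x *m invmx t *m s^T = x by rewrite -mulmxDr mulmxKV.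
  rewrite -!scalemxAl -scalerBr; congr (_ *: _).
  by rewrite -{2}h addrAC subrr add0r.
Qed.
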